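(* Let $\gamma$ be a gauge on $\mathbb{R}^d$ with skewness $\sigma$. The Fermat–Weber estimator with respect to $\gamma$ has breakdown point exactly $\frac{1}{1+\sigma}$.
   Context: A gauge $\gamma$ on $\mathbb{R}^d$ is the Minkowski functional of a convex compact set $B_\gamma$ with the origin in its interior (not necessarily symmetric); its skewness is $\sigma=\sup_{x\neq0}\gamma(x)/\gamma(-x)$. For a finite set $A$ with positive weights summing to $1$, the Fermat–Weber set $\mathrm{FW}_\gamma(A,w)$ is the set of minimizers of $\sum_{a\in A}w_a\gamma(x-a)$. For $\tau<1$, a $\tau$-corruption of $(A,w)$ is obtained by replacing a subsample $C\subseteq A$ of total weight $w_C\le\tau$ by another finite weighted sample $C'$ of the same total weight. The estimator is $\tau$-robust if for every such $(A,w)$ there is a bounded set $K_\tau$ containing $\mathrm{FW}_\gamma(A')$ for all $\tau$-corruptions $A'$ of $A$. The breakdown point is the supremum of all $\tau$ for which the estimator is $\tau$-robust. *)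

(* Defs.v *)
From HB Require Import structures.
From mathcomp Require Import all_boot all_order all_algebra.
From mathcomp Require Import all_classical all_reals all_analysis.
Set Implicit Arguments. Unset Strict Implicit. Unset Printing Implicit Defensive.
Import Order.TTheory GRing.Theory Num.Theory.
Import numFieldNormedType.Exports.
Local Open Scope classical_set_scope.
Local Open Scope ring_scope.

Definition convex_body_set (R : realType) (d : nat) (B : set 'rV[R]_d) : Prop :=
  forall x y (l : R), B x -> B y -> 0 <= l -> l <= 1 -> B (l *: x + (1 - l) *: y).

Definition gauge_body (R : realType) (d : nat) (B : set 'rV[R]_d) : Prop :=
  [/\ convex_body_set B, compact B & interior B 0].

Definition minkowski_gauge (R : realType) (d : nat) (B : set 'rV[R]_d) (x : 'rV[R]_d) : R :=
  inf [set t : R | 0 < t /\ exists2 b, B b & x = t *: b].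

Definition skewness (R : realType) (d : nat) (gam : 'rV[R]_d -> R) : R :=
  sup [set gam x / gam (- x) | x in [set x : 'rV[R]_d | x != 0]].

(* A finite weighted sample: n distinct points a_i with positive weights w_i
   (total weight is imposed separately). *)
Definition weighted_sample (R : realType) (d n : nat)
  (a : 'I_n -> 'rV[R]_d) (w : 'I_n -> R) : Prop :=
  injective a /\ (forall i, 0 < w i).

(* Fermat-Weber objective of the corrupted sample A' = (A \ C) u C'
   (coinciding points have their weights added, which does not change the sum). *)
Definition corrupted_objective (R : realType) (d : nat) (gam : 'rV[R]_d -> R)
  (n : nat) (a : 'I_n -> 'rV[R]_d) (w : 'I_n -> R) (C : {set 'I_n})
  (m : nat) (c : 'I_m -> 'rV[R]_d) (v : 'I_m -> R) (x : 'rV[R]_d) : R :=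
  \sum_(i < n | i \notin C) w i * gam (x - a i) + \sum_(j < m) v j * gam (x - c j).

Definition FW_set (R : realType) (d : nat) (f : 'rV[R]_d -> R) : set 'rV[R]_d :=
  [set x | forall y, f x <= f y].

Definition tau_corruption (R : realType) (d : nat) (tau : R)
  (n : nat) (w : 'I_n -> R) (C : {set 'I_n})
  (m : nat) (c : 'I_m -> 'rV[R]_d) (v : 'I_m -> R) : Prop :=
  [/\ \sum_(i in C) w i <= tau, weighted_sample c v
    & \sum_(j < m) v j = \sum_(i in C) w i].

(* tau-robustness of the Fermat-Weber estimator w.r.t. gam : for every weighted
   sample (A, w) there is a bounded set K (here: a ball of radius M) containing
   FW(A') for every tau-corruption A' of A. *)
Definition tau_robust (R : realType) (d : nat) (gam : 'rV[R]_d -> R) (tau : R) : Prop :=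
  forall (n : nat) (a : 'I_n -> 'rV[R]_d) (w : 'I_n -> R),
    weighted_sample a w -> \sum_(i < n) w i = 1 ->
    exists M : R, forall (C : {set 'I_n}) (m : nat) (c : 'I_m -> 'rV[R]_d) (v : 'I_m -> R),
      tau_corruption tau w C c v ->
      forall x, FW_set (corrupted_objective gam a w C c v) x -> `|x| <= M.

Definition breakdown_point (R : realType) (d : nat) (gam : 'rV[R]_d -> R) : R :=
  sup [set tau : R | tau < 1 /\ tau_robust gam tau].

(* Main.v *)
Require Import Defs.
From HB Require Import structures.
From mathcomp Require Import all_boot all_order all_algebra.
From mathcomp Require Import all_classical all_reals all_analysis.
From mathcomp Require Import ring lra.
Import Order.TTheory GRing.Theory Num.Theory.
Import numFieldNormedType.Exports.
Local Open Scope classical_set_scope.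
Local Open Scope ring_scope.

Lemma gb_in (R : realType) (d : nat) (B : set 'rV[R]_d) : gauge_body B ->
  exists2 r : R, 0 < r & forall x, `|x| < r -> B x.
Proof.
case=> _ _ /nbhs_ballP [e e0 he]; exists e => // x hx; apply: he.
by rewrite -ball_normE /= sub0r normrN.
Qed.

Lemma gb_bd (R : realType) (d : nat) (B : set 'rV[R]_d) : gauge_body B ->
  exists2 M : R, 0 < M & forall x, B x -> `|x| <= M.
Proof.
case=> _ /compact_bounded /ex_strict_bound_gt0 [M M0 hM] _.
by exists M => // x /hM /ltW.
Qed.


Lemma lip_cont (R : realType) (d : nat) (f : 'rV[R]_d -> R) (k : R) : 0 < k ->
  (forall x y, `|f x - f y| <= k * `|x - y|) -> continuous f.
Proof.
move=> k0 hf x; apply/(@cvgrPdist_lt _ R^o _ _ (nbhs_filter x)) => e e0.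
apply/nbhs_ballP; exists (e / k) => /=; first by rewrite divr_gt0.
move=> y; rewrite -ball_normE /= => hy.
by apply: le_lt_trans (hf x y) _; rewrite mulrC -ltr_pdivlMr.
Qed.

Lemma exists_min (R : realType) (d : nat) (f : 'rV[R]_d -> R) (rho : R) :
  continuous f -> 0 < rho -> (forall y, rho < `|y| -> f 0 < f y) ->
  exists c, forall y, f c <= f y.
Proof.
move=> fc r0 hf.
have memA y : closed_ball (0 : 'rV[R]_d) rho y <-> `|y| <= rho.
  by rewrite closed_ballE // /closed_ball_ /= sub0r normrN.
have [c cA hc] : exists2 c, c \in closed_ball (0 : 'rV[R]_d) rho &
    forall t, t \in closed_ball (0 : 'rV[R]_d) rho -> f c <= f t.
  apply: compact_EVT_min.
  - by exists 0; apply/memA; rewrite normr0 ltW.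
  - apply: bounded_closed_compact; last exact: closed_ball_closed.
    exists rho; split; first exact: gtr0_real.
    by move=> M hM y /memA hy; apply: le_trans hy (ltW hM).
  - by move=> y; apply: continuous_subspaceT.
exists c => y; have [hy|hy] := leP `|y| rho.
  by apply: hc; apply/mem_set/memA.
apply: le_trans (ltW (hf _ hy)); apply: hc; apply/mem_set/memA.
by rewrite normr0 ltW.
Qed.

Arguments gb_in {R d B}. Arguments gb_bd {R d B}.
Section G.
Context (R : realType) (d : nat) (B : set 'rV[R]_d) (hB : gauge_body B).
Local Notation gam := (minkowski_gauge B).
Local Notation Sx x := [set t : R | 0 < t /\ exists2 b, B b & x = t *: b].

Lemma mg_mem x t : 0 < t -> B (t^-1 *: x) -> Sx x t.
Proof.
move=> t0 hb; split=> //; exists (t^-1 *: x) => //.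
by rewrite scalerA mulfV ?gt_eqF // scale1r.
Qed.

Lemma mg_big : exists2 r : R, 0 < r & forall x t, `|x| / r < t -> Sx x t.
Proof.
have [r r0 hr] := gb_in hB; exists r => // x t ht.
have t0 : 0 < t by apply: le_lt_trans ht; exact: divr_ge0 (normr_ge0 _) (ltW r0).
apply: mg_mem => //; apply: hr.
rewrite normrZ gtr0_norm ?invr_gt0 // mulrC ltr_pdivrMr // mulrC -ltr_pdivrMr //.
Qed.

Lemma mg_ne x : Sx x !=set0.
Proof.
have [r r0 hr] := mg_big; exists (`|x| / r + 1); apply: hr; by rewrite ltrDl.
Qed.

Lemma mg_lbd x : has_lbound (Sx x).
Proof. by exists 0 => t [/ltW]. Qed.

Lemma mg_ge0 x : 0 <= gam x.
Proof. by apply: lb_le_inf; [exact: mg_ne | move=> t [/ltW]]. Qed.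

Lemma mg_le x t : Sx x t -> gam x <= t.
Proof. by move=> h; apply: ge_inf => //; exact: mg_lbd. Qed.

Lemma mg_ub : exists2 r : R, 0 < r & forall x, gam x <= `|x| / r.
Proof.
have [r r0 hr] := mg_big; exists r => // x.
apply/ler_addgt0Pr => e e0; apply: mg_le; apply: hr; by rewrite ltrDl.
Qed.

Lemma mg_lb : exists2 M : R, 0 < M & forall x, `|x| <= M * gam x.
Proof.
have [M M0 hM] := gb_bd hB; exists M => // x.
rewrite mulrC -ler_pdivrMr //; apply: lb_le_inf; first exact: mg_ne.
move=> t [t0 [b bB ->]]; rewrite ler_pdivrMr // normrZ gtr0_norm //.
by rewrite ler_pM2l // hM.
Qed.


Lemma B0 : B 0.
Proof. by have [r r0 hr] := gb_in hB; apply: hr; rewrite normr0. Qed.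

Lemma mg_up x t t' : Sx x t -> t <= t' -> Sx x t'.
Proof.
move=> [t0 [b bB ->]] tt'; have t'0 : 0 < t' by apply: lt_le_trans tt'.
split=> //; exists ((t / t') *: b + (1 - t / t') *: 0).
  case: hB => cB _ _; apply: cB => //; first exact: B0.
    by rewrite divr_ge0 // ltW.
  by rewrite ler_pdivrMr // mul1r.
by rewrite scaler0 addr0 scalerA mulrCA divff ?gt_eqF // mulr1.
Qed.

Lemma mg_tri x y : gam (x + y) <= gam x + gam y.
Proof.
apply/ler_addgt0Pr => e e0.
have e20 : 0 < e / 2 by rewrite divr_gt0.
have [s [s0 [b bB hb]] hs] := inf_adherent e20 (conj (mg_ne x) (mg_lbd x)).
have [s' [s'0 [b' bB' hb']] hs'] := inf_adherent e20 (conj (mg_ne y) (mg_lbd y)).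
have ss0 : 0 < s + s' by rewrite addr_gt0.
have : gam (x + y) <= s + s'.
  apply: mg_le; split=> //; exists ((s / (s + s')) *: b + (1 - s / (s + s')) *: b').
    case: hB => cB _ _; apply: cB => //.
      by rewrite divr_ge0 // ltW.
    by rewrite ler_pdivrMr // mul1r lerDl ltW.
  rewrite scalerDr !scalerA hb hb'; congr (_ *: _ + _ *: _).
    by field; rewrite gt_eqF.
  by field; rewrite gt_eqF.
move=> h; apply: (le_trans h).
rewrite /minkowski_gauge in hs hs' *.
lra.
Qed.

Lemma mg_hom x l : 0 < l -> gam (l *: x) <= l * gam x.
Proof.
move=> l0; rewrite mulrC -ler_pdivrMr //; apply: lb_le_inf; first exact: mg_ne.
move=> t [t0 [b bB ->]]; rewrite ler_pdivrMr // mulrC; apply: mg_le.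
split; first by rewrite mulr_gt0.
by exists b => //; rewrite scalerA.
Qed.


Lemma mg0 : gam 0 = 0.
Proof.
have [r r0 hr] := mg_ub; apply/eqP; rewrite eq_le mg_ge0 andbT.
by apply: le_trans (hr 0) _; rewrite normr0 mul0r.
Qed.

Lemma mg_lip : exists2 r : R, 0 < r & forall x y, `|gam x - gam y| <= `|x - y| / r.
Proof.
have [r r0 hr] := mg_ub; exists r => // x y.
have h1 : gam x <= gam (x - y) + gam y by rewrite -{1}(subrK y x) mg_tri.
have h2 : gam y <= gam (y - x) + gam x by rewrite -{1}(subrK x y) mg_tri.
have := hr (x - y); have := hr (y - x); rewrite distrC => h3 h4.
by rewrite ler_norml; apply/andP; split; lra.
Qed.

Lemma mg_pos x : x != 0 -> 0 < gam x.
Proof.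
move=> x0; have [M M0 hM] := mg_lb; have := hM x.
have : 0 < `|x| by rewrite normr_gt0.
move=> h1 h2; have : 0 < M * gam x by apply: lt_le_trans h2.
by rewrite pmulr_rgt0.
Qed.

Local Notation sig := (skewness gam).
Local Notation SS := [set gam x / gam (- x) | x in [set x : 'rV[R]_d | x != 0]].

Lemma SS_ub : has_ubound SS.
Proof.
have [r r0 hr] := mg_ub; have [M M0 hM] := mg_lb.
exists (M / r) => _ [x /= x0 <-].
have g0 : 0 < gam (- x) by apply: mg_pos; rewrite oppr_eq0.
rewrite ler_pdivrMr // mulrAC ler_pdivlMr //.
have := hr x; have := hM (- x); rewrite normrN.
move=> h1 h2; rewrite -ler_pdivlMr // ; apply: (le_trans h2).
by rewrite ler_pM2r ?invr_gt0 // mulrC.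
Qed.

Lemma sig_ge0 : 0 <= sig.
Proof.
have [[y [x x0 _]]|S0] := pselect (SS !=set0).
  apply: le_trans (ub_le_sup SS_ub (ex_intro2 _ _ x x0 erefl)).
  by rewrite divr_ge0 // mg_ge0.
rewrite /skewness (_ : SS = set0) ?sup0 //.
by rewrite predeqE => y; split => // Sy; apply: S0; exists y.
Qed.

Lemma sig_le x : gam (- x) <= sig * gam x.
Proof.
have [->|x0] := eqVneq x 0; first by rewrite oppr0 mg0 mulr0.
have g0 := mg_pos _ x0.
rewrite -ler_pdivrMr //; apply: ub_le_sup; first exact: SS_ub.
by exists (- x); rewrite /= ?oppr_eq0 // opprK.
Qed.

Lemma sig_gt z : 0 <= z -> z < sig -> exists2 u, u != 0 & z < gam u / gam (- u).
Proof.
move=> z0 zs; have [Sne|S0] := pselect (SS !=set0).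
  by have [_ [u u0 <-] hz] := sup_gt Sne zs; exists u.
move: zs; rewrite /skewness (_ : SS = set0) ?sup0.
  by move=> /(le_lt_trans z0); rewrite ltxx.
by rewrite predeqE => y; split => // Sy; apply: S0; exists y.
Qed.


Lemma sum_notin (n : nat) (w : 'I_n -> R) (C : {set 'I_n}) :
  \sum_(i < n) w i = \sum_(i in C) w i + \sum_(i < n | i \notin C) w i.
Proof. by rewrite (bigID (mem C)). Qed.

Lemma robust_lt tau : tau * (1 + sig) < 1 -> tau_robust gam tau.
Proof.
move=> ht n a w [_ wpos] w1.
have [Mb Mb0 hMb] := mg_lb.
pose K := \sum_(i < n) w i * (gam (a i) + gam (- a i)).
pose del := 1 - tau * (1 + sig).
have del0 : 0 < del by rewrite /del subr_gt0.
exists (Mb * (K / del)) => C m c v [hC [_ vpos] hv] x hx.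
have := hx 0; rewrite /corrupted_objective.
set V := \sum_(i in C) w i.
have V0 : 0 <= V by apply: sumr_ge0 => i _; exact: ltW.
have h1 : \sum_(i < n | i \notin C) w i * gam (0 - a i) + (1 - V) * gam x
  - \sum_(i < n | i \notin C) w i * (gam (a i) + gam (- a i))
   <= \sum_(i < n | i \notin C) w i * gam (x - a i).
  have -> : 1 - V = \sum_(i < n | i \notin C) w i by rewrite -w1 (sum_notin _ w C) addrC addKr.
  rewrite mulr_suml -big_split -sumrB /=; apply: ler_sum => i _.
  have hw := wpos i.
  have : gam x <= gam (x - a i) + gam (a i) by rewrite -{1}(subrK (a i) x) mg_tri.
  rewrite sub0r => h; have := ler_wpM2l (ltW hw) h; lra.
have h2 : \sum_(j < m) v j * gam (0 - c j) - V * gam (- x)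
   <= \sum_(j < m) v j * gam (x - c j).
  rewrite /V -hv mulr_suml -sumrB; apply: ler_sum => j _.
  have hw := vpos j.
  have : gam (0 - c j) <= gam (- x) + gam (x - c j).
    by apply: le_trans (mg_tri _ _); rewrite addrA addNr.
  move=> h; have := ler_wpM2l (ltW hw) h; lra.
have h3 : \sum_(i < n | i \notin C) w i * (gam (a i) + gam (- a i)) <= K.
  rewrite /K (sum_notin _ _ C) lerDr; apply: sumr_ge0 => i _.
  by rewrite mulr_ge0 ?addr_ge0 ?mg_ge0 // ltW.
have h4 := sig_le x.
have h5 : V * gam (- x) <= V * (sig * gam x) by apply: ler_wpM2l.
have gx := mg_ge0 x; have s0 := sig_ge0.
have h6 : V * (1 + sig) * gam x <= tau * (1 + sig) * gam x.
  by apply: ler_wpM2r => //; apply: ler_wpM2r => //; lra.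
move=> hf.
have hg : del * gam x <= K.
  rewrite /del; lra.
apply: le_trans (hMb x) _; rewrite ler_pM2l // ler_pdivlMr // mulrC //.
Qed.

Lemma nonrobust tau : 1 < tau * (1 + sig) -> tau < 1 -> ~ tau_robust gam tau.
Proof.
move=> h1 h2 hrob.
have s0 := sig_ge0.
have tau0 : 0 < tau.
  rewrite ltNge; apply/negP => ht.
  have : tau * (1 + sig) <= 0 by rewrite mulr_le0_ge0 //; lra.
  lra.
have z0 : 0 <= (1 - tau) / tau by rewrite divr_ge0 //; lra.
have zs : (1 - tau) / tau < sig by rewrite ltr_pdivrMr //; lra.
have [u u0 hu] := sig_gt _ z0 zs.
have gu := mg_pos _ u0.
have gmu : 0 < gam (- u) by apply: mg_pos; rewrite oppr_eq0.
move: hu; rewrite ltr_pdivrMr // mulrAC ltr_pdivlMr // => hu.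
pose eps := tau * gam u - (1 - tau) * gam (- u).
have eps0 : 0 < eps by rewrite /eps; lra.
pose a : 'I_2 -> 'rV[R]_d := fun i => if val i == 0%N then 0 else u.
pose w : 'I_2 -> R := fun i => if val i == 0%N then 1 - tau else tau.
have ws : weighted_sample a w.
  split.
    move=> [[|[|i]] hi] [[|[|j]] hj] //= e; try by apply/val_inj.
    - by move: u0; rewrite /a /= in e; rewrite -e eqxx.
    - by move: u0; rewrite /a /= in e; rewrite e eqxx.
  by move=> [[|[|i]] hi] //=; rewrite /w /=; lra.
have w1 : \sum_(i < 2) w i = 1.
  by rewrite !big_ord_recl big_ord0 /w /=; lra.
have [M hM] := hrob 2 a w ws w1.
have [r r0 hr] := mg_ub.
pose t := tau * `|M| / (r * eps) + 1.
have t0 : 0 < t by rewrite /t ltr_wpDl // divr_ge0 // ?mulr_ge0 // ltW.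
pose C : {set 'I_2} := [set ord_max]%SET.
pose c : 'I_1 -> 'rV[R]_d := fun _ => - (t *: u).
pose v : 'I_1 -> R := fun _ => tau.
have wC : \sum_(i in C) w i = tau.
  by rewrite (big_pred1 ord_max) // => i; rewrite /C inE.
have hcor : tau_corruption tau w C c v.
  split; first by rewrite wC.
    split; last by move=> i; exact: tau0.
    by move=> i j _; apply/val_inj; rewrite (ord1 i) (ord1 j).
  by rewrite wC big_ord1.
pose f := fun x => (1 - tau) * gam x + tau * gam (x + t *: u).
have fobj x : corrupted_objective gam a w C c v x = f x.
  rewrite /corrupted_objective big_ord1 /c opprK big_mkcond !big_ord_recl big_ord0 /=.
  rewrite /C !inE /=.
  by rewrite /f /w /a /v /= subr0 !addr0.
have [rl rl0 hl] := mg_lip.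
have fc : continuous f.
  apply: (@lip_cont _ _ _ rl^-1); first by rewrite invr_gt0.
  move=> x y; have l1 := hl x y; have l2 := hl (x + t *: u) (y + t *: u).
  have e : (x + t *: u) - (y + t *: u) = x - y by rewrite opprD addrACA subrr addr0.
  rewrite e in l2.
  have -> : f x - f y = (1 - tau) * (gam x - gam y)
      + tau * (gam (x + t *: u) - gam (y + t *: u)) by rewrite /f; ring.
  have h3 : 0 <= 1 - tau by lra.
  apply: le_trans (ler_normD _ _) _; rewrite !normrM (ger0_norm (ltW tau0)) (ger0_norm h3).
  have := ler_wpM2l (ltW tau0) l2.
  move=> h4; have := ler_wpM2l h3 l1; lra.
have [Mb Mb0 hMb] := mg_lb.
have f0 : 0 <= f 0 by apply: addr_ge0; apply: mulr_ge0; rewrite ?mg_ge0 //; lra.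
have [x0 hx0] : exists c, forall y, f c <= f y.
  apply: (@exists_min _ _ f (Mb * f 0 / (1 - tau) + 1) fc).
    by rewrite ltr_wpDl // divr_ge0 ?mulr_ge0 //; lra.
  move=> y hy.
  have h3 : 0 < 1 - tau by lra.
  have h4 : (1 - tau) * (Mb * f 0 / (1 - tau) + 1) < (1 - tau) * `|y|.
    by rewrite ltr_pM2l.
  have h5 : (1 - tau) * (Mb * f 0 / (1 - tau) + 1) = Mb * f 0 + (1 - tau).
    by field; rewrite gt_eqF.
  have h6 := ler_wpM2l (ltW h3) (hMb y).
  have h7 : 0 <= tau * gam (y + t *: u) by rewrite mulr_ge0 ?mg_ge0 // ltW.
  have h8 : Mb * f 0 < Mb * f y.
    have : Mb * f y = (1 - tau) * (Mb * gam y) + Mb * (tau * gam (y + t *: u)).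
      by rewrite /f; ring.
    have : 0 <= Mb * (tau * gam (y + t *: u)) by rewrite mulr_ge0 // ltW.
    lra.
  by rewrite ltr_pM2l in h8.
have hx : FW_set (corrupted_objective gam a w C c v) x0 by move=> y; rewrite !fobj.
have hxM := hM C 1 c v hcor x0 hx.
have k1 := hx0 (- (t *: u)).
have k2 : gam (- (t *: u)) <= t * gam (- u) by rewrite -scalerN; apply: mg_hom.
have k3 : gam u <= t^-1 * gam (t *: u).
  have ti : 0 < t^-1 by rewrite invr_gt0.
  by have := mg_hom (t *: u) _ ti; rewrite scalerA mulVf ?gt_eqF // scale1r.
have k4 : gam (t *: u) <= gam (x0 + t *: u) + gam (- x0).
  by apply: le_trans (mg_tri _ _); rewrite addrAC subrr add0r.
have k5 : gam (- x0) <= `|M| / r.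
  apply: le_trans (hr _) _; rewrite normrN ler_pM2r ?invr_gt0 //.
  exact: le_trans hxM (ler_norm _).
have k6 : t * gam u <= gam (t *: u) by rewrite -ler_pdivlMl // mulrC.
have k7 : (1 - tau) * gam x0 >= 0 by rewrite mulr_ge0 ?mg_ge0 //; lra.
have e1 : t * eps = tau * `|M| / r + eps by rewrite /t; field; rewrite ?gt_eqF.
move: k1; rewrite /f addNr mg0 mulr0 addr0 => k1.
have m1 := ler_wpM2l (ltW tau0) k6.
have m2 := ler_wpM2l (ltW tau0) k4.
have m3 := ler_wpM2l (ltW tau0) k5.
have m4 : (1 - tau) * gam (- (t *: u)) <= (1 - tau) * (t * gam (- u)).
  by apply: ler_wpM2l => //; lra.
have : t * eps = tau * (t * gam u) - (1 - tau) * (t * gam (- u)) by rewrite /eps; ring.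
lra.
Qed.

End G.

Theorem mainTheorem6 (R : realType) (d : nat) (B : set 'rV[R]_d) :
  gauge_body B ->
  breakdown_point (minkowski_gauge B) = 1 / (1 + skewness (minkowski_gauge B)).
Proof.
move=> hB; rewrite /breakdown_point.
have s0 := @sig_ge0 _ _ _ hB.
set s := skewness _ in s0 *.
set T := [set tau : R | _].
have s1 : 0 < 1 + s by lra.
have hA tau : tau < 1 / (1 + s) -> T tau.
  move=> ht; split.
    apply: lt_le_trans ht _; rewrite ler_pdivrMr // mul1r; lra.
  by apply: (@robust_lt _ _ _ hB); rewrite -ltr_pdivlMr.
have hBd tau : T tau -> tau <= 1 / (1 + s).
  move=> [t1 hr]; rewrite leNgt; apply/negP => ht.
  by apply: (@nonrobust _ _ _ hB tau) => //; rewrite -ltr_pdivrMr.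
have ub : has_ubound T by exists (1 / (1 + s)) => x /hBd.
apply/eqP; rewrite eq_le; apply/andP; split.
  apply: ge_sup; last by move=> x /hBd.
  by exists (1 / (1 + s) - 1); apply: hA; rewrite ltrBlDr ltrDl.
apply/ler_addgt0Pr => e e0.
have : T (1 / (1 + s) - e) by apply: hA; rewrite ltrBlDr ltrDl.
move/(ub_le_sup ub); lra.
Qed.
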